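(* There is an algorithm that, given the codes $x^c,y^c\in\{0,1\}^{n-3}$ of two pyramidal tours $x,y\in PT_n$, decides whether the vertices $x^v$ and $y^v$ of $\mathrm{PYR}(n)$ are adjacent in time $O(n)$.
   Context: Let $K_n$ be the complete undirected graph on vertex set $\{1,\dots,n\}$ with edge set $E$. A Hamiltonian cycle $\langle 1,i_1,\dots,i_r,n,j_1,\dots,j_{n-r-2}\rangle$ is called a pyramidal tour if $i_1<i_2<\dots<i_r$ and $j_1>j_2>\dots>j_{n-r-2}$; tours are undirected. Let $PT_n$ be the set of all pyramidal tours. For $x\in PT_n$ its characteristic vector $x^v\in\mathbb{R}^E$ has $x^v_e=1$ if edge $e$ lies in $x$ and $0$ otherwise. The pyramidal tours polytope is $\mathrm{PYR}(n)=\operatorname{conv}\{x^v : x\in PT_n\}$. Every pyramidal tour contains the edge $\{1,2\}$; the tour is oriented so that vertex $2$ belongs to the increasing part. The code of $x$ is the $0/1$ vector $x^c=(x^c_3,\dots,x^c_{n-1})$ with $x^c_i=1$ if vertex $i$ is visited in the increasing part of $x$ and $x^c_i=0$ otherwise; $x\mapsto x^c$ is a bijection from $PT_n$ onto $\{0,1\}^{n-3}$. *)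

(* Defs.v *)
From HB Require Import structures.
From mathcomp Require Import all_boot all_order all_algebra.
Set Implicit Arguments. Unset Strict Implicit. Unset Printing Implicit Defensive.
Import Order.TTheory GRing.Theory Num.Theory.

(* The pyramidal tour with code c = (c_3,...,c_{n-1}) (c_i = nth (i-3)):
   1, 2, (increasing: vertices i in 3..n-1 with c_i = 1), n,
   (decreasing: vertices i in 3..n-1 with c_i = 0), back to 1. *)
Definition tour_seq (n : nat) (c : seq bool) : seq nat :=
  [:: 1; 2] ++ [seq i <- iota 3 (n - 3) | nth false c (i - 3)]
  ++ [:: n] ++ rev [seq i <- iota 3 (n - 3) | ~~ nth false c (i - 3)].

Definition tour_edge (n : nat) (c : seq bool) (i j : nat) : bool :=
  let t := tour_seq n c in
  [&& i \in t, j \in t & (next t i == j) || (next t j == i)].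

(* Edge set E of K_n: pairs (i,j) of 0-indexed vertices with i < j;
   ordinal k stands for vertex k+1. *)
Definition Edge (n : nat) := {p : 'I_n * 'I_n | p.1 < p.2}.

Definition charvec (R : realFieldType) (n : nat) (c : seq bool)
  : {ffun Edge n -> R} :=
  [ffun e : Edge n => ((tour_edge n c (val e).1.+1 (val e).2.+1)%:R)%R].

Definition dotE (R : realFieldType) (n : nat) (w x : {ffun Edge n -> R}) : R :=
  \sum_(e : Edge n) w e * x e.

(* x^v and y^v are adjacent vertices of PYR(n) = conv{ z^v : z in PT_n }:
   they are distinct and [x^v, y^v] is a face, i.e. some linear functional
   takes equal values on x^v, y^v and strictly smaller values on every
   other vertex. *)
Definition PYR_adjacent (R : realFieldType) (n : nat)
    (c d : (n - 3).-tuple bool) : Prop :=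
  charvec R n c != charvec R n d /\
  exists w : {ffun Edge n -> R},
    dotE w (charvec R n c) = dotE w (charvec R n d) /\
    forall z : (n - 3).-tuple bool,
      charvec R n z != charvec R n c -> charvec R n z != charvec R n d ->
      (dotE w (charvec R n z) < dotE w (charvec R n c))%R.

Inductive move := MLeft | MStay | MRight.

Definition move_int (m : move) : int :=
  match m with MLeft => (-1)%R | MStay => 0%R | MRight => 1%R end.

Record TM := {
  tm_k : nat;                                   (* number of tapes; tape 0 = input *)
  tm_state : finType;
  tm_sym : finType;
  tm_blank : tm_sym;
  tm_input : bool * bool -> tm_sym;
  tm_start : tm_state;
  tm_halt : tm_state -> option bool;            (* Some b: halting state, answer b *)
  tm_delta : tm_state -> {ffun 'I_tm_k -> tm_sym} ->
             tm_state * {ffun 'I_tm_k -> tm_sym * move}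
}.

Record config (M : TM) : Type := Config {
  cst : tm_state M;
  ctape : 'I_(tm_k M) -> int -> tm_sym M;
  chead : 'I_(tm_k M) -> int
}.
Arguments Config M : clear implicits.
Arguments tm_halt : clear implicits.
Arguments tm_delta : clear implicits.
Arguments tm_start : clear implicits.
Arguments tm_input : clear implicits.
Arguments tm_blank : clear implicits.

Definition tm_step (M : TM) (c : config M) : config M :=
  if tm_halt M (cst c) is Some _ then c else
  let rd := [ffun i => ctape c i (chead c i)] in
  let sa := tm_delta M (cst c) rd in
  @Config M sa.1
    (fun i p => if p == chead c i then (sa.2 i).1 else ctape c i p)
    (fun i => (chead c i + move_int (sa.2 i).2)%R).

Definition tm_init (M : TM) (inp : seq (bool * bool)) : config M :=
  @Config M (tm_start M)
    (fun i p => if [&& (i == 0 :> nat), (0 <= p)%R & (p < (size inp)%:Z)%R]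
                then tm_input M (nth (false, false) inp (absz p))
                else tm_blank M)
    (fun _ => 0%R).

(* M, started on inp, is in a halting state with answer b after t steps
   (halting states are absorbing, so it halted within t steps). *)
Definition tm_answers_within (M : TM) (inp : seq (bool * bool)) (t : nat)
    (b : bool) : Prop :=
  tm_halt M (cst (iter t (@tm_step M) (tm_init M inp))) = Some b.

(* Main.v *)
Require Import Defs.
From HB Require Import structures.
From mathcomp Require Import all_boot all_order all_algebra.
From mathcomp Require Import zify lra.
Set Implicit Arguments. Unset Strict Implicit. Unset Printing Implicit Defensive.
Import Order.TTheory GRing.Theory Num.Theory.


Lemma ex_pred (P : pred nat) lo k : P lo -> lo < k ->
  exists a, [/\ lo <= a, a < k, P a & forall m, a < m -> m < k -> ~~ P m].
Proof.
move=> Plo; elim: k => // k IH; rewrite ltnS leq_eqVlt => /orP [/eqP <-|lt].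
- exists lo; split=> // m H1 H2; exfalso; lia.
- case Pk: (P k).
  + exists k; split => //; [lia| move=> m H1 H2; exfalso; lia].
  + have [a [h1 h2 h3 h4]] := IH lt. exists a; split => //; first lia.
    move=> m am mk; case: (ltnP m k) => mk'; first by apply: h4.
    have -> : m = k by lia. by rewrite Pk.
Qed.

Lemma ex_succ (P : pred nat) a hi : P hi -> a < hi ->
  exists b, [/\ a < b, b <= hi, P b & forall m, a < m -> m < b -> ~~ P m].
Proof.
move=> Phi ahi.
have ex : exists b, (a < b) && P b by exists hi; rewrite ahi Phi.
case: (ex_minnP ex) => b /andP[ab Pb] minb.
exists b; split => //; first by apply: minb; rewrite ahi Phi.
move=> m am mb; apply/negP => Pm.
have := minb m; rewrite am Pm => /(_ isT); lia.
Qed.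

Section BLevel.
Variable N : nat.
Definition inrg k := (1 < k) && (k < N).
Definition node (B : nat -> bool) k := (k == 1) || (k == N) || (inrg k && B k).
Definition arcb (B : nat -> bool) a b :=
  [&& node B a, node B b & all (fun m => ~~ node B m) (iota a.+1 (b - a.+1))].
Definition EB (B : nat -> bool) i j := if j == i.+1 then ~~ (inrg i && B i) else arcb B i j.-1.

Lemma arcbP (B : nat -> bool) a b : a < b -> reflect
  [/\ node B a, node B b & forall m, a < m -> m < b -> ~~ node B m] (arcb B a b).
Proof.
move=> ab; apply: (iffP and3P) => [[h1 h2 /allP h3]|[h1 h2 h3]]; split => //.
- move=> m am mb; apply: h3; rewrite mem_iota; lia.
- apply/allP => m; rewrite mem_iota => H; apply: h3; lia.
Qed.

Definition arc (B : nat -> bool) a b := [/\ a < b, node B a, node B b &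
   forall m, a < m -> m < b -> ~~ node B m].

Lemma arc_uniq (B : nat -> bool) a b b' : arc B a b -> arc B a b' -> b = b'.
Proof.
move=> [h1 h2 h3 h4] [g1 g2 g3 g4].
case: (ltngtP b b') => // H.
- by move: (g4 b h1 H); rewrite h3.
- by move: (h4 b' g1 H); rewrite g3.
Qed.

Lemma node1 (B : nat -> bool) : node B 1. Proof. by rewrite /node eqxx. Qed.
Lemma nodeN (B : nat -> bool) : node B N. Proof. by rewrite /node eqxx orbT. Qed.

Lemma ex_arc_in (B : nat -> bool) k : 1 < k -> node B k -> exists a, a < k /\ arc B a k.
Proof.
move=> k1 nk; have [a [h1 h2 h3 h4]] := ex_pred (node1 B) k1.
by exists a; split => //; split.
Qed.

Lemma ex_arc_out (B : nat -> bool) a : a < N -> node B a -> exists b, b <= N /\ arc B a b.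
Proof.
move=> aN na; have [b [h1 h2 h3 h4]] := ex_succ (nodeN B) aN.
by exists b; split => //; split.
Qed.

Lemma EB_arc (B : nat -> bool) a b : 1 <= a -> a < b -> EB B a b.+1 = arcb B a b.
Proof. move=> a1 ab; rewrite /EB; case: eqP => [H|//]; lia. Qed.

Lemma EB_short (B : nat -> bool) i : EB B i i.+1 = ~~ (inrg i && B i).
Proof. by rewrite /EB eqxx. Qed.


Lemma EB_local (B1 B2 : nat -> bool) i j : i < j ->
  (forall k, i <= k -> k < j -> B1 k = B2 k) -> EB B1 i j = EB B2 i j.
Proof.
move=> ij H.
have nd: forall k, i <= k -> k < j -> node B1 k = node B2 k.
  by move=> k h1 h2; rewrite /node (H k h1 h2).
rewrite /EB; case: eqP => _; first by rewrite (H i (leqnn i) ij).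
rewrite /arcb (nd i) // (nd j.-1); try lia.
congr (_ && (_ && _)); apply: eq_in_all => m; rewrite mem_iota => Hm.
rewrite (nd m) //; lia.
Qed.

Lemma EB_block (B : nat -> bool) i j m : i < m -> m < j.-1 -> node B m -> EB B i j = false.
Proof.
move=> im mj nm; rewrite /EB; case: eqP => [?|_]; first lia.
apply/negP => /(arcbP B (ltn_trans im mj)) [_ _ H].
by move: (H m im mj); rewrite nm.
Qed.

Lemma node_inrg (B : nat -> bool) k : inrg k -> node B k = B k.
Proof. by rewrite /node /inrg => /andP[h1 h2]; rewrite /= ; case: eqP; case: eqP => //; lia. Qed.

Lemma EB_split (B1 B2 : nat -> bool) m i j : inrg m -> B1 m -> B2 m -> i < j ->
  (EB B1 i j : nat) + EB B2 i j =
  (EB (fun k => if k <= m then B1 k else B2 k) i j : nat) +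
   EB (fun k => if k <= m then B2 k else B1 k) i j.
Proof.
move=> im b1 b2 ij.
case: (leqP j m.+1) => jm.
  rewrite (@EB_local (fun k => if k <= m then B1 k else B2 k) B1) //; last first.
    by move=> k _ kj; have ->: k <= m by lia.
  rewrite (@EB_local (fun k => if k <= m then B2 k else B1 k) B2) //.
  by move=> k _ kj; have ->: k <= m by lia.
case: (leqP m i) => mi.
  rewrite (@EB_local (fun k => if k <= m then B1 k else B2 k) B2) //; last first.
    move=> k ik _; case: (boolP (k <= m)) => km //; have -> : k = m by lia. by rewrite b1 b2.
  rewrite (@EB_local (fun k => if k <= m then B2 k else B1 k) B1) //; last first.
    move=> k ik _; case: (boolP (k <= m)) => km //; have -> : k = m by lia. by rewrite b1 b2.
  by rewrite addnC.
have mj: m < j.-1 by lia.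
rewrite !(@EB_block _ i j m) // node_inrg // ?leqnn //.
Qed.

Lemma node_le (B : nat -> bool) b : 1 <= N -> node B b -> b <= N.
Proof. by move=> N1; rewrite /node /inrg; case: eqP => [->//|_]; case: eqP => [->//|_] /= /andP[/andP[_ h] _]; lia. Qed.

Lemma node_pos (B : nat -> bool) a : 0 < N -> node B a -> 0 < a.
Proof. by move=> N0; case: a => //; rewrite /node /inrg /= orbF => /eqP H; lia. Qed.

Section Inside.
Variables (X Y Z : nat -> bool) (u v s : nat).
Hypotheses (u1 : 1 <= u) (uv : u < v) (vN : v <= N) (nZu : node Z u) (nXu : node X u)
  (xonly : forall k, u < k -> k < v -> node X k -> ~~ node Y k)
  (F2 : forall a b, arc Z a b -> 1 <= a -> arc X a b \/ arc Y a b)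
  (aXs : arc X u s) (aZs : arc Z u s).

Lemma inside k : u < k -> k < v -> node Z k = node X k.
Proof.
elim/ltn_ind: k => k IH uk kv.
apply/idP/idP => H.
- have [a [ak aZ]] := ex_arc_in (leq_ltn_trans u1 uk) H.
  case: (ltngtP a u) => au.
  + by case: aZ => _ _ _ /(_ u au uk); rewrite nZu.
  + have nXa : node X a by rewrite -(IH a ak au (ltn_trans ak kv)); case: aZ.
    case: (F2 aZ (ltnW (leq_ltn_trans u1 au))) => [[]//|[_ nYa _ _]].
    by move: (xonly au (ltn_trans ak kv) nXa); rewrite nYa.
  + by subst a; rewrite (arc_uniq aZ aZs); case: aXs.
- have [a [ak aX]] := ex_arc_in (leq_ltn_trans u1 uk) H.
  case: (ltngtP a u) => au.
  + by case: aX => _ _ _ /(_ u au uk); rewrite nXu.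
  + have nXa : node X a by case: aX.
    have nZa : node Z a by rewrite (IH a ak au (ltn_trans ak kv)).
    have [b [_ aZb]] := ex_arc_out (leq_trans (ltn_trans ak kv) vN) nZa.
    case: (F2 aZb (ltnW (leq_ltn_trans u1 au))) => [aXb|[_ nYa _ _]].
    * by rewrite (arc_uniq aX aXb); case: aZb.
    * by move: (xonly au (ltn_trans ak kv) nXa); rewrite nYa.
  + by subst a; rewrite (arc_uniq aX aXs); case: aZs.
Qed.
End Inside.


Definition Cnode (Bx By : nat -> bool) k := inrg k && Bx k && By k.

Lemma U_lemma (Bx By Bz : nat -> bool) : 1 < N ->
  (exists d, inrg d /\ Bx d != By d) ->
  (forall d1 m d2, inrg d1 -> inrg d2 -> d1 < m -> m < d2 ->
     Bx d1 != By d1 -> Bx d2 != By d2 -> ~~ (Bx m && By m)) ->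
  (forall i j, 1 <= i -> i < j -> j <= N.+1 -> EB Bz i j -> EB Bx i j || EB By i j) ->
  (forall k, inrg k -> Bz k = Bx k) \/ (forall k, inrg k -> Bz k = By k).
Proof.
move=> N1 [d0 [id0 Dd0]] SB cont.
have F1 : forall k, inrg k -> Bx k -> By k -> Bz k.
  move=> k ik bx by_; apply/negPn/negP => nz.
  have := cont k k.+1; rewrite !EB_short ik bx by_ nz /=.
  move: ik; rewrite /inrg => /andP[h1 h2] H; have := H (ltnW h1) (ltnSn k); lia.
have F2 : forall a b, arc Bz a b -> 1 <= a -> arc Bx a b \/ arc By a b.
  move=> a b [ab na nb nm] a1.
  have bN : b <= N by exact: (node_le (ltnW N1) nb).
  have : arcb Bz a b by apply/arcbP => //; split.
  rewrite -EB_arc // => /(cont a b.+1 a1 (ltn_trans ab (ltnSn b))).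
  rewrite ltnS => /(_ bN); rewrite !EB_arc // => /orP[/(arcbP _ ab)|/(arcbP _ ab)] [h1 h2 h3];
   by [left|right]; split.
have d01 : 1 < d0 by move: id0; rewrite /inrg => /andP[].
have d0N : d0 < N by move: id0; rewrite /inrg => /andP[].
have [u [u1 ud0 Pu umax]] := @ex_pred (fun k => (k == 1) || Cnode Bx By k) 1 d0 ltac:(by []) d01.
have [v [d0v vN Pv vmin]] := @ex_succ (fun k => (k == N) || Cnode Bx By k) d0 N ltac:(by rewrite /= eqxx) d0N.
have noC : forall k, u < k -> k < v -> ~~ Cnode Bx By k.
  move=> k uk kv; case: (ltngtP k d0) => kd.
  - by move: (umax k uk kd); rewrite negb_or => /andP[].
  - by move: (vmin k kd kv); rewrite negb_or => /andP[].
  - by subst k; rewrite /Cnode; apply/negP => /andP[/andP[_ q1] q2]; move: Dd0; rewrite q1 q2.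
have CnodeN : forall k, Cnode Bx By k -> [/\ node Bx k, node By k & node Bz k].
  move=> k /andP[/andP[ik bx] by_]; rewrite !node_inrg //; split => //; exact: F1.
have nodeu : [/\ node Bx u, node By u & node Bz u].
  case/orP: Pu => [/eqP ->|Cu]; [by rewrite !node1 | exact: CnodeN].
have allD : forall k, inrg k -> Bx k != By k -> u < k < v.
  move=> k ik Dk; have k1 : 1 < k by move: ik => /andP[].
  apply/andP; split.
  - case: (ltngtP u k) => // uk; exfalso.
    + case/orP: Pu => [/eqP u1'|Cu]; first lia.
      move: Cu => /andP[/andP[iu bx] by_].
      by move: (SB k u d0 ik id0 uk ud0 Dk Dd0); rewrite bx by_.
    + subst k; case/orP: Pu => [/eqP u1'|Cu]; first lia.
      by move: Cu Dk => /andP[/andP[_ -> ] ->].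
  - case: (ltngtP k v) => // vk; exfalso.
    + case/orP: Pv => [/eqP vN'|Cv]; first by move: ik => /andP[]; lia.
      move: Cv => /andP[/andP[iv bx] by_].
      by move: (SB d0 v k id0 ik d0v vk Dd0 Dk); rewrite bx by_.
    + subst k; case/orP: Pv => [/eqP vN'|Cv]; first by move: ik => /andP[]; lia.
      by move: Cv Dk => /andP[/andP[_ -> ] ->].
have outside : forall k, inrg k -> ~~ (u < k < v) -> Bz k = Bx k.
  move=> k ik ko.
  have exy : Bx k = By k by apply/eqP; apply: contraNT ko => /(allD k ik).
  case bx: (Bx k).
  - by apply: F1 => //; rewrite -exy.
  - apply/negP => bz; have k1 : 1 < k by move: ik => /andP[].
    have [a [ak aZ]] := @ex_arc_in Bz k k1 ltac:(by rewrite node_inrg).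
    have a1 : 1 <= a by case: aZ => _ na _ _; apply: (node_pos _ na); exact: ltnW N1.
    by case: (F2 a k aZ a1) => [[_ _ ]|[_ _]]; rewrite node_inrg // -?exy bx.
have uN : u < N by apply: ltn_trans ud0 d0N.
have [s [_ aZs]] := @ex_arc_out Bz u uN (let: And3 _ _ h := nodeu in h).
have u1' : 1 <= u by [].
have vN' : v <= N by [].
have uv : u < v by apply: ltn_trans ud0 d0v.
have inr_uv : forall k, u < k -> k < v -> inrg k.
  by move=> k uk kv; rewrite /inrg; apply/andP; split; [apply: leq_ltn_trans u1 uk|apply: leq_trans kv vN].
case: (F2 u s aZs u1') => aXYs; [left|right] => k ik; case/boolP: (u < k < v) => [/andP[uk kv]|ko].
- rewrite -(node_inrg Bz ik) -(node_inrg Bx ik); apply: (@inside Bx By Bz u v s) => //.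
  + by case: nodeu. + by case: nodeu.
  + move=> k' uk' k'v; rewrite !node_inrg ?inr_uv // => bx; apply/negP => by_.
    by move: (noC k' uk' k'v); rewrite /Cnode inr_uv // bx by_.
- exact: outside.
- rewrite -(node_inrg Bz ik) -(node_inrg By ik); apply: (@inside By Bx Bz u v s) => //.
  + by case: nodeu. + by case: nodeu.
  + move=> k' uk' k'v; rewrite !node_inrg ?inr_uv // => by_; apply/negP => bx.
    by move: (noC k' uk' k'v); rewrite /Cnode inr_uv // bx by_.
  + by move=> a b H H1; case: (F2 a b H H1); [right|left].
- rewrite (outside k ik ko); apply/eqP; by apply: contraNT ko => /(allD k ik).
Qed.
End BLevel.


Fixpoint consec (s : seq nat) a b :=
  if s is x :: s' then
    (if s' is y :: _ then (x == a) && (y == b) else false) || consec s' a b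
  else false.

Lemma consecP s a b : reflect (exists s1 s2, s = s1 ++ a :: b :: s2) (consec s a b).
Proof.
elim: s => [|x s IH] /=; first by constructor => -[[|? ?] [? //]].
apply: (iffP orP) => [[|/IH [s1 [s2 ->]]]|[s1 [s2 E]]].
- by case: s {IH} => // y s /andP[/eqP <- /eqP <-]; exists [::], s.
- by exists (x :: s1), s2.
- case: s1 E => [|z s1] /= [-> E].
  + by left; rewrite E !eqxx.
  + by right; apply/IH; exists s1, s2.
Qed.

Lemma consec_rev s a b : consec (rev s) a b = consec s b a.
Proof.
apply/consecP/consecP => [[s1 [s2 E]]|[s1 [s2 ->]]].
- exists (rev s2), (rev s1); rewrite -(revK s) E rev_cat /= !rev_cons.
  by rewrite -!cats1 -!catA.
- exists (rev s2), (rev s1); rewrite rev_cat /= !rev_cons.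
  by rewrite -!cats1 -!catA.
Qed.

Lemma consec_catl s r a b : consec s a b -> consec (s ++ r) a b.
Proof. by move/consecP => [s1 [s2 ->]]; apply/consecP; exists s1, (s2 ++ r); rewrite -catA. Qed.

Lemma consec_catr s r a b : consec r a b -> consec (s ++ r) a b.
Proof. by move/consecP => [s1 [s2 ->]]; apply/consecP; exists (s ++ s1), s2; rewrite catA. Qed.

Lemma consec_cons x s a b :
  consec (x :: s) a b = (if s is y :: _ then (x == a) && (y == b) else false) || consec s a b.
Proof. by []. Qed.

Lemma consec_cat2 s y r a b :
  consec (s ++ y :: r) a b = consec (rcons s y) a b || consec (y :: r) a b.
Proof.
elim: s => [|x s IH]; first by rewrite /= ?orbF.
rewrite cat_cons rcons_cons !consec_cons IH orbA; congr (_ || _ || _).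
by case: s {IH}.
Qed.

Lemma consec_sorted s a b : sorted ltn s ->
  consec s a b = [&& a \in s, b \in s, a < b & all (fun m => ~~ ((a < m) && (m < b))) s].
Proof.
elim: s => [|x s IH] //= Hs.
have Hs' : sorted ltn s := path_sorted Hs.
have allx : all (ltn x) s := order_path_min ltn_trans Hs.
rewrite IH //.
case: s IH Hs Hs' allx => [|y s] IH Hs Hs' allx /=.
- rewrite !inE; apply/esym/negbTE; apply/negP => /and4P[/eqP -> /eqP -> ]; by rewrite ltnn.
- move: Hs => /andP[xy Hys]; have {}xy : x < y := xy.
  have ally : all (ltn y) s := order_path_min ltn_trans Hys.
  apply/idP/idP.
  + case/orP => [/andP[/eqP <- /eqP <-]|].
    * rewrite !inE !eqxx orbT xy !ltnn /= ?andbF /=.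
      apply/allP => m ms; rewrite negb_and -leqNgt; apply/orP; right.
      by move/allP: ally => /(_ m ms) H; rewrite -leqNgt ltnW.
    * move=> /and4P[as_ bs ab Hall]; have xa : x < a := allP allx a as_.
      rewrite (in_cons x (y :: s) a) (in_cons x (y :: s) b) as_ bs !orbT ab Hall /= andbT.
      by rewrite ltnNge (ltnW xa).
  + move=> /and4P[]; rewrite !inE => /orP[/eqP ax|/orP[/eqP ay|as_]].
    * subst a => /orP[/eqP bx|/orP[/eqP by_|bs]] xb /andP[_ /andP[Hy Hall]].
      -- by subst b; rewrite ltnn in xb.
      -- by subst b; rewrite !eqxx.
      -- have yb : y < b := allP ally b bs. by move: Hy; rewrite xy yb.
    * subst a => /orP[/eqP bx|/orP[/eqP by_|bs]] yb /andP[_ /andP[_ Hall]].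
      -- by subst b; move: (ltn_trans xy yb); rewrite ltnn.
      -- by subst b; rewrite ltnn in yb.
      -- by apply/orP; right; rewrite eqxx bs orbT yb /= ltnn /= Hall.
    * move=> /orP[/eqP bx|/orP[/eqP by_|bs]] ab /andP[_ /andP[Hy Hall]].
      -- move/allP: allx => /(_ a); rewrite inE as_ orbT => /(_ isT) xa.
         by subst b; move: (ltn_trans xa ab); rewrite ltnn.
      -- apply/orP; right; subst b.
         rewrite as_ orbT eqxx ab /=.
         by rewrite ltnn Hall.
      -- by apply/orP; right; rewrite as_ bs !orbT ab Hy Hall.
Qed.


Definition lab (c : seq bool) k := if k == 2 then true else nth false c (k - 3).
Definition onS n c (s : bool) k := (k == 1) || (k == n) || ((1 < k < n) && (lab c k == s)).

Section Tour.
Variables (n : nat) (c : seq bool).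
Hypothesis n3 : 3 <= n.

Definition LT := [seq k <- iota 1 n | onS n c true k].
Definition LF := [seq k <- iota 1 n | onS n c false k].
Definition inc := [seq i <- iota 3 (n - 3) | nth false c (i - 3)].
Definition dec := [seq i <- iota 3 (n - 3) | ~~ nth false c (i - 3)].

Lemma iota_split : iota 1 n = [:: 1; 2] ++ iota 3 (n - 3) ++ [:: n].
Proof.
rewrite {1}(_ : n = 2 + (n - 3) + 1); last lia.
rewrite !iotaD -catA /=; congr (_ :: _ :: _ ++ [:: _]); lia.
Qed.

Lemma onS_mid s i : 3 <= i < n -> onS n c s i = (nth false c (i - 3) == s).
Proof.
move=> Hi; rewrite /onS /lab.
have -> : (i == 1) = false by apply/eqP; lia.
have -> : (i == n) = false by apply/eqP; lia.
have -> : (i == 2) = false by apply/eqP; lia.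
by have -> : 1 < i < n by lia.
Qed.

Lemma onS1 s : onS n c s 1. Proof. by rewrite /onS eqxx. Qed.
Lemma onSn s : onS n c s n. Proof. by rewrite /onS eqxx orbT. Qed.
Lemma onS2 s : onS n c s 2 = s.
Proof.
rewrite /onS /lab /=.
have -> : (2 == n) = false by apply/eqP; lia.
by have -> : 2 < n by lia; case: s.
Qed.

Lemma LT_eq : LT = [:: 1; 2] ++ inc ++ [:: n].
Proof.
rewrite /LT iota_split !filter_cat /= ?onS1 ?onS2 ?onSn; congr (_ :: _ :: _ ++ _).
apply: eq_in_filter => i; rewrite mem_iota => Hi; rewrite onS_mid; last lia.
by case: (nth _ _ _).
Qed.

Lemma LF_eq : LF = [:: 1] ++ dec ++ [:: n].
Proof.
rewrite /LF iota_split !filter_cat /= ?onS1 ?onS2 ?onSn; congr (_ :: _); apply: (congr1 (fun s => s ++ [:: n])).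
apply: eq_in_filter => i; rewrite mem_iota => Hi; rewrite onS_mid; last lia.
by case: (nth _ _ _).
Qed.

Definition t := tour_seq n c.

Lemma tour_eq : t = LT ++ rev dec.
Proof. by rewrite /t /tour_seq LT_eq -!catA. Qed.

Lemma LT_sorted : sorted ltn LT.
Proof. by apply: sorted_filter; [exact: ltn_trans | exact: iota_ltn_sorted]. Qed.
Lemma LF_sorted : sorted ltn LF.
Proof. by apply: sorted_filter; [exact: ltn_trans | exact: iota_ltn_sorted]. Qed.

Lemma tour_uniq : uniq t.
Proof.
rewrite tour_eq cat_uniq rev_uniq filter_uniq ?iota_uniq //=; rewrite filter_uniq ?iota_uniq // andbT.
apply/hasPn => x; rewrite mem_rev mem_filter mem_iota => /andP[nx Hx].
rewrite /LT mem_filter onS_mid; last lia.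
by move: nx; case: (nth _ _ _).
Qed.

Lemma path_consec (e : rel nat) x s a b : path e x s -> consec (x :: s) a b -> e a b.
Proof.
elim: s x => [|y s IH] x //.
rewrite consec_cons => /andP[exy ps] /orP[/andP[/eqP E1 /eqP E2]|H].
  by rewrite -E1 -E2. exact: (IH y ps H). Qed.

Lemma next_consec a b : consec (rcons t 1) a b -> next t a = b.
Proof.
have := cycle_next tour_uniq.
have [t' Et] : exists t', t = 1 :: t' by rewrite tour_eq LT_eq; eexists.
rewrite Et /= => Hp H; apply/eqP; exact: (path_consec Hp H).
Qed.

Lemma succ_ex a : a \in t -> exists b, consec (rcons t 1) a b.
Proof.
case/splitPr => p1 p2; rewrite rcons_cat rcons_cons.
case: p2 => [|b p2] /=; [exists 1|exists b]; apply/consecP; by exists p1; eexists.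
Qed.

Lemma rcons_t_split : rcons t 1 = ([:: 1; 2] ++ inc) ++ n :: (rcons (rev dec) 1).
Proof. by rewrite tour_eq LT_eq -!cats1 -!catA. Qed.

Lemma revLF : rev LF = n :: rcons (rev dec) 1.
Proof. by rewrite LF_eq !rev_cat /= -cats1. Qed.

Lemma consec_t a b : consec (rcons t 1) a b = consec LT a b || consec (rev LF) a b.
Proof.
rewrite rcons_t_split consec_cat2 revLF; congr (consec _ _ _ || _).
by rewrite LT_eq -cats1 catA.
Qed.

Lemma consec_lt (s : seq nat) a b : sorted ltn s -> consec s a b -> a < b.
Proof. by move=> Hs; rewrite consec_sorted // => /and4P[]. Qed.

Lemma consec_mem (s : seq nat) a b : consec s a b -> (a \in s) && (b \in s).
Proof. by move/consecP => [s1 [s2 ->]]; rewrite !mem_cat !inE !eqxx !orbT. Qed.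

Lemma LT_sub x : x \in LT -> x \in t.
Proof. by rewrite tour_eq mem_cat => ->. Qed.
Lemma LF_sub x : x \in LF -> x \in t.
Proof.
rewrite LF_eq tour_eq LT_eq !mem_cat !inE mem_rev.
by case/orP => [->|/orP[->|->]]; rewrite ?orbT.
Qed.

Lemma tour_edge_consec i j : i < j ->
  tour_edge n c i j = consec LT i j || consec LF i j.
Proof.
move=> ij; rewrite /tour_edge -/t; apply/idP/idP.
- move=> /and3P[it jt /orP[/eqP Hn|/eqP Hn]].
  + have [b Hb] := succ_ex it; move: (next_consec Hb); rewrite Hn => ?; subst b.
    move: Hb; rewrite consec_t => /orP[->//|]; rewrite consec_rev => /(consec_lt LF_sorted).
    by rewrite ltnNge (ltnW ij).
  + have [b Hb] := succ_ex jt; move: (next_consec Hb); rewrite Hn => ?; subst b.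
    move: Hb; rewrite consec_t => /orP[/(consec_lt LT_sorted)|]; first by rewrite ltnNge (ltnW ij).
    by rewrite consec_rev => ->; rewrite orbT.
- case/orP => H.
  + move: (consec_mem H) => /andP[/LT_sub -> /LT_sub ->].
    by rewrite (next_consec (_ : consec _ i j)) ?eqxx // consec_t H.
  + move: (consec_mem H) => /andP[/LF_sub -> /LF_sub ->].
    by rewrite (next_consec (_ : consec _ j i)) ?eqxx ?orbT // consec_t consec_rev H orbT.
Qed.

End Tour.


Definition Bc (c : seq bool) k := lab c k != lab c k.+1.
Definition SE n c s i j :=
  [&& onS n c s i, onS n c s j & all (fun m => ~~ onS n c s m) (iota i.+1 (j - i.+1))].

Section T2.
Variables (n : nat) (c : seq bool).
Hypothesis n3 : 3 <= n.

Lemma onS_in s k : 1 < k < n -> onS n c s k = (lab c k == s).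
Proof.
move=> Hk; rewrite /onS Hk.
have -> : (k == 1) = false by apply/eqP; lia.
by have -> : (k == n) = false by apply/eqP; lia.
Qed.

Lemma consec_SE s i j : 1 <= i -> i < j -> j <= n ->
  consec [seq k <- iota 1 n | onS n c s k] i j = SE n c s i j.
Proof.
move=> i1 ij jn.
rewrite consec_sorted; last by apply: sorted_filter; [exact: ltn_trans | exact: iota_ltn_sorted].
rewrite !mem_filter !mem_iota /SE.
have -> : (1 <= i < 1 + n) = true by lia.
have -> : (1 <= j < 1 + n) = true by lia.
rewrite ij !andbT; congr (_ && (_ && _)).
apply/allP/allP => H m.
- rewrite mem_iota => Hm; apply/negP => Sm.
  have : m \in [seq k <- iota 1 n | onS n c s k] by rewrite mem_filter Sm mem_iota; lia.
  move=> Hin; have Hb : i < m < j by lia.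
  by move: (H m Hin); rewrite Hb.
- rewrite mem_filter mem_iota => /andP[Sm Hm]; apply/negP => /andP[im mj].
  have Hin : m \in iota i.+1 (j - i.+1) by rewrite mem_iota; lia.
  by move: (H m Hin); rewrite Sm.
Qed.

Lemma SE_EB i j : 1 <= i -> i < j -> j <= n ->
  SE n c true i j || SE n c false i j = EB n.-1 (Bc c) i j.
Proof.
move=> i1 ij jn; rewrite /EB /inrg.
case: eqP => [Ej|Ej].
- subst j; rewrite /SE subnn /= !andbT.
  case: (ltngtP i 1) => [|i1'|i1']; first lia.
  + have -> : i < n.-1 = (i.+1 < n) by lia.
    case: (ltnP i.+1 n) => iN /=.
    * rewrite !onS_in; try lia; rewrite /Bc.
      by case: (lab c i); case: (lab c i.+1).
    * have -> : i.+1 = n by lia.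
      rewrite !onSn.
      rewrite !andbT !onS_in; try lia; by case: (lab c i).
  + by subst i; rewrite onS1 onS2 //.
- have ij' : i < j.-1 by lia.
  have j2 : i.+1 < j by lia.
  apply/idP/(@arcbP n.-1 (Bc c) i j.-1 ij').
  + move=> HS.
    have [s [Si Sj Hm]] : exists s, [/\ onS n c s i, onS n c s j &
          forall m, i < m -> m < j -> lab c m != s].
      case/orP: HS => /and3P[Si Sj /allP Hm]; [exists true|exists false]; split => // m im mj;
      (have Hin : m \in iota i.+1 (j - i.+1) by rewrite mem_iota; lia);
      by move: (Hm m Hin); rewrite onS_in //; lia.
    split.
    * case: (ltngtP i 1) => [|i1'|->]; [lia| |exact: node1].
      rewrite node_inrg /inrg ?i1' /=; last lia.
      move: Si; rewrite onS_in; last lia.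
      by rewrite /Bc; move: (Hm i.+1 (ltnSn i) j2); clear Hm Sj; case: (lab c i); case: (lab c i.+1); case: s.
    * case: (ltngtP j n) => [jn'| |->]; [|lia|exact: nodeN].
      rewrite node_inrg /inrg; last lia.
      move: Sj; rewrite onS_in; last lia.
      rewrite /Bc prednK; last lia.
      by move: (Hm j.-1 ltac:(lia) ltac:(lia)); clear Hm Si; case: (lab c j); case: (lab c j.-1); case: s.
    * move=> m im mj; rewrite node_inrg /inrg; last lia.
      rewrite /Bc; move: (Hm m im ltac:(lia)) (Hm m.+1 ltac:(lia) ltac:(lia)); clear Hm Si Sj.
      by case: (lab c m); case: (lab c m.+1); case: s.
  + move=> [Ni Nj Nm].
    have claim : forall d, i.+1 + d < j -> lab c (i.+1 + d) = lab c i.+1.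
      elim => [|d IH] H; first by rewrite addn0.
      rewrite -IH; last lia.
      move: (Nm (i.+1 + d) ltac:(lia) ltac:(lia)); rewrite node_inrg /inrg; last lia.
      by rewrite /Bc addnS; case: (lab c _); case: (lab c _).
    have claim' : forall m, i < m -> m < j -> lab c m = lab c i.+1.
      move=> m im mj; have -> : m = i.+1 + (m - i.+1) by lia.
      apply: claim; lia.
    suff HS : SE n c (~~ lab c i.+1) i j.
      by case: (lab c i.+1) HS => /= ->; rewrite ?orbT.
    apply/and3P; split.
    * case: (ltngtP i 1) => [|i1'|->]; [lia| |exact: onS1].
      rewrite onS_in; last lia.
      move: Ni; rewrite node_inrg /inrg /Bc; last lia.
      by case: (lab c i); case: (lab c i.+1).
    * case: (ltngtP j n) => [jn'| |->]; [|lia|exact: onSn].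
      rewrite onS_in; last lia.
      move: Nj; rewrite node_inrg /inrg /Bc; last lia.
      rewrite prednK; last lia.
      rewrite (claim' j.-1); first by case: (lab c j); case: (lab c i.+1).
      all: try lia.
    * apply/allP => m; rewrite mem_iota => Hm.
      rewrite onS_in; last lia.
      rewrite claim'; first by case: (lab c i.+1).
      all: lia.
Qed.
End T2.


Definition Q := (bool * bool * bool * bool * bool)%type.
Definition St := (Q + bool)%type.
Definition Sym := option (bool * bool).

Definition dstep (q : Q) (ab : bool * bool) : Q :=
  let: (hD, dc, bd, px, py) := q in
  let bx := px != ab.1 in let by_ := py != ab.2 in
  let D := bx != by_ in let C := bx && by_ in
  (hD || D, dc || (C && hD), bd || (D && dc), ab.1, ab.2).

Definition acc (q : Q) : bool := let: (hD, _, bd, _, _) := q in hD && ~~ bd.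
Definition q0 : Q := (false, false, false, true, true).

Definition delta (s : St) (rd : {ffun 'I_1 -> Sym}) : St * {ffun 'I_1 -> Sym * move} :=
  match s with
  | inl q => match rd ord0 with
             | Some ab => (inl (dstep q ab), [ffun _ => (Some ab, MRight)])
             | None => (inr (acc q), [ffun _ => (None, MStay)])
             end
  | inr b => (inr b, [ffun _ => (None, MStay)])
  end.

Definition haltf (s : St) : option bool := if s is inr b then Some b else None.

Definition M : TM := {| tm_k := 1; tm_state := St; tm_sym := Sym; tm_blank := None;
  tm_input := Some; tm_start := inl q0; tm_halt := haltf; tm_delta := delta |}.

Lemma sim (inp : seq (bool * bool)) t : t <= size inp ->
  let cf := iter t (@tm_step M) (tm_init M inp) in
  [/\ cst cf = inl (foldl dstep q0 (take t inp)), forall i, chead cf i = (Posz t) &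
      forall i p, ((Posz t) <= p)%R -> ctape cf i p = ctape (tm_init M inp) i p].
Proof.
elim: t => [|t IH] Ht /=.
- by rewrite take0; split.
- have [H1 H2 H3] := IH (ltnW Ht).
  set cf := iter t _ _ in H1 H2 H3 *.
  have rd : ctape cf ord0 (chead cf ord0) = Some (nth (false, false) inp t).
    rewrite H2 H3 // /tm_init /=.
    have -> : (Posz t < Posz (size inp))%R = true by lia.
    by [].
  rewrite /tm_step H1 /= ffunE rd /=; split.
  + by rewrite (take_nth (false, false) Ht) foldl_rcons.
  + by move=> i; rewrite ffunE /= H2; lia.
  + move=> i p Hp; rewrite ffunE /=.
    have -> : (p == chead cf i) = false by rewrite H2; apply/eqP; lia.
    by apply: H3; lia.
Qed.

Lemma step_halted (cf : config M) b : haltf (cst cf) = Some b -> tm_step cf = cf.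
Proof. by rewrite /tm_step /= => ->. Qed.

Lemma halt_stable (cf : config M) b m : haltf (cst cf) = Some b ->
  haltf (cst (iter m (@tm_step M) cf)) = Some b.
Proof.
move=> H; elim: m => //= m IH.
by rewrite (step_halted IH).
Qed.

Lemma run (inp : seq (bool * bool)) T : size inp < T ->
  tm_answers_within M inp T (acc (foldl dstep q0 inp)).
Proof.
move=> HT; rewrite /tm_answers_within.
have [H1 H2 H3] := sim (leqnn (size inp)).
set cf := iter (size inp) _ _ in H1 H2 H3.
have -> : T = (T - (size inp).+1) + (size inp).+1 by lia.
rewrite iterD iterS -/cf; apply: halt_stable.
rewrite /tm_step H1 /= ffunE H2 H3 // /tm_init /=.
have -> : (Posz (size inp) < Posz (size inp))%R = false by lia.
by rewrite take_size.
Qed.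


Lemma tour_edge_EB n c i j : 3 <= n -> 1 <= i -> i < j -> j <= n ->
  tour_edge n c i j = EB n.-1 (Bc c) i j.
Proof.
move=> n3 i1 ij jn.
by rewrite tour_edge_consec // /LT /LF !consec_SE // SE_EB.
Qed.

Lemma EB_ext N (B1 B2 : nat -> bool) i j :
  (forall k, inrg N k -> B1 k = B2 k) -> EB N B1 i j = EB N B2 i j.
Proof.
move=> E.
have E' : forall k, inrg N k && B1 k = inrg N k && B2 k.
  by move=> k; case h: (inrg N k) => //=; rewrite E.
have nd : forall k, node N B1 k = node N B2 k by move=> k; rewrite /node E'.
rewrite /EB /arcb E' !nd; congr (if _ then _ else _ && (_ && _)).
by apply: eq_all => m; rewrite nd.
Qed.

Lemma charvecE (R : realFieldType) n (c : seq bool) e : 3 <= n ->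
  charvec R n c e = ((EB n.-1 (Bc c) (val e).1.+1 (val e).2.+1 : nat)%:R)%R.
Proof.
move=> n3; rewrite /charvec ffunE tour_edge_EB //; case: e => [[a b] /= H] //.

Qed.

Lemma edge_of n i j : 1 <= i -> i < j -> j <= n ->
  exists e : Edge n, (val e).1.+1 = i /\ (val e).2.+1 = j.
Proof.
move=> i1 ij jn.
have h1 : i.-1 < n by lia.
have h2 : j.-1 < n by lia.
have h3 : i.-1 < j.-1 by lia.
exists (exist (fun p : 'I_n * 'I_n => p.1 < p.2) (Ordinal h1, Ordinal h2) h3) => /=; lia.
Qed.

Lemma cv_eq (R : realFieldType) n (c d : seq bool) : 3 <= n ->
  (forall k, inrg n.-1 k -> Bc c k = Bc d k) -> charvec R n c = charvec R n d.
Proof.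
move=> n3 E; apply/ffunP => e; rewrite !charvecE //.
by rewrite (@EB_ext _ (Bc c) (Bc d)).
Qed.

Lemma cv_neq (R : realFieldType) n (c d : seq bool) k : 3 <= n ->
  inrg n.-1 k -> Bc c k != Bc d k -> charvec R n c != charvec R n d.
Proof.
move=> n3 ik Hk; apply/negP => /eqP E.
have [e [e1 e2]] : exists e : Edge n, (val e).1.+1 = k /\ (val e).2.+1 = k.+1.
  by apply: edge_of; move: ik; rewrite /inrg; lia.
move/ffunP: E => /(_ e); rewrite !charvecE // e1 e2 !EB_short ik /=.
by move/eqP; rewrite eqr_nat; move: Hk; case: (Bc c k); case: (Bc d k).
Qed.

(* code from switch set *)
Fixpoint labB (B : nat -> bool) k : bool :=
  if k is k'.+1 then (if k' < 2 then true else labB B k' (+) B k') else true.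

Definition codeOf n (B : nat -> bool) : (n - 3).-tuple bool :=
  [tuple labB B (val i + 3) | i < n - 3].

Lemma lab_codeOf n B k : 2 <= k -> k < n -> lab (codeOf n B) k = labB B k.
Proof.
move=> k2 kn; rewrite /lab; case: eqP => [->//|k2'].
have H : k - 3 < n - 3 by lia.
rewrite -[k - 3]/(nat_of_ord (Ordinal H)) nth_mktuple /=.
by have -> : k - 3 + 3 = k by lia.
Qed.

Lemma Bc_codeOf n B k : 2 <= k -> k.+1 < n -> Bc (codeOf n B) k = B k.
Proof.
move=> k2 kn; rewrite /Bc !lab_codeOf //; try lia.
rewrite /=; have -> : (k < 2) = false by lia.
by case: (labB B k); case: (B k).
Qed.

Definition Dp c d p := Bc c p != Bc d p.
Definition Cp c d p := Bc c p && Bc d p.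
Definition hasDt c d t := has (Dp c d) (iota 2 t).
Definition DCt c d t := has (fun m => Cp c d m && hasDt c d (m - 2)) (iota 2 t).
Definition badt c d t := has (fun k => Dp c d k && DCt c d (k - 2)) (iota 2 t).

Lemma iota_rcons m k : iota m k.+1 = rcons (iota m k) (m + k).
Proof. by rewrite -addn1 iotaD cats1. Qed.

Lemma lab_succ (c : seq bool) t : lab c (t.+1 + 2) = nth false c t.
Proof. rewrite /lab; case: eqP => [|_]; first lia. by have -> : t.+1 + 2 - 3 = t by lia. Qed.

Lemma dfa_inv (c d : seq bool) t : size c = size d -> t <= size c ->
  foldl dstep q0 (take t (zip c d)) =
  (hasDt c d t, DCt c d t, badt c d t, lab c (t + 2), lab d (t + 2)).
Proof.
move=> Es; elim: t => [|t IH] Ht; first by rewrite take0.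
have Hz : t < size (zip c d) by rewrite size_zip -Es minnn.
rewrite (take_nth (false, false) Hz) foldl_rcons IH ?(ltnW Ht) // nth_zip //.
rewrite /dstep /= -!lab_succ /hasDt /DCt /badt !iota_rcons !has_rcons.
have -> : 2 + t - 2 = t by lia.
rewrite /Dp /Cp /Bc /= (addSn t 2) -/(hasDt c d t) -/(DCt c d t).
congr (_, _, _, _, _); by rewrite (addnC 2 t) orbC.
Qed.

Section Adj.
Variables (R : realFieldType) (n : nat) (c d : (n - 3).-tuple bool).
Hypothesis n3 : 3 <= n.

Lemma inrg_iota k : inrg n.-1 k -> k \in iota 2 (n - 3).
Proof. by rewrite mem_iota /inrg => /andP[h1 h2]; apply/andP; split; lia. Qed.

Lemma iota_inrg k : k \in iota 2 (n - 3) -> inrg n.-1 k.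
Proof. by rewrite mem_iota /inrg => /andP[h1 h2]; apply/andP; split; lia. Qed.

Lemma hasD_ex : hasDt c d (n - 3) -> exists k, inrg n.-1 k /\ Bc c k != Bc d k.
Proof. by move/hasP => [k /iota_inrg ik Hk]; exists k. Qed.

Lemma hasD_none : ~~ hasDt c d (n - 3) -> forall k, inrg n.-1 k -> Bc c k = Bc d k.
Proof.
move/hasPn => H k ik; move: (H k (inrg_iota ik)); rewrite /Dp.
by case: (Bc c k); case: (Bc d k).
Qed.

Lemma bad_intro d1 m d2 : inrg n.-1 d1 -> inrg n.-1 d2 -> d1 < m -> m < d2 ->
  Dp c d d1 -> Cp c d m -> Dp c d d2 -> badt c d (n - 3).
Proof.
move=> i1 i2 h1 h2 D1 Cm D2.
apply/hasP; exists d2; first exact: inrg_iota.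
rewrite D2 /=; apply/hasP; exists m.
  by rewrite mem_iota; move: i1 i2; rewrite /inrg; lia.
rewrite Cm /=; apply/hasP; exists d1 => //.
by rewrite mem_iota; move: i1 i2; rewrite /inrg; lia.
Qed.

Lemma bad_elim : badt c d (n - 3) -> exists d1 m d2,
  [/\ inrg n.-1 d1, inrg n.-1 m, inrg n.-1 d2, d1 < m & m < d2] /\
      [/\ Dp c d d1, Cp c d m & Dp c d d2].
Proof.
move/hasP => [d2 /iota_inrg i2 /andP[D2 /hasP[m Hm /andP[Cm /hasP[d1 H1 D1]]]]].
move: Hm H1; rewrite !mem_iota => Hm H1.
move: i2; rewrite /inrg => /andP[a1 a2].
exists d1, m, d2; split; split => //; try (apply/andP; split); lia.
Qed.

Definition xe (B : seq bool) (e : Edge n) := EB n.-1 (Bc B) (val e).1.+1 (val e).2.+1.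

Lemma dotE_cv (w : {ffun Edge n -> R}) (z : seq bool) :
  dotE w (charvec R n z) = (\sum_(e : Edge n) w e * (xe z e : nat)%:R)%R.
Proof. by apply: eq_bigr => e _; rewrite charvecE. Qed.

Lemma adj_forward : hasDt c d (n - 3) -> ~~ badt c d (n - 3) -> PYR_adjacent R c d.
Proof.
move=> hD nbad.
have [k [ik Dk]] := hasD_ex hD.
split; first exact: (cv_neq R n3 ik Dk).
pose w : {ffun Edge n -> R} :=
  [ffun e => if xe c e && xe d e then 1 else if xe c e || xe d e then 0 else -1]%R.
exists w; split.
- rewrite !dotE_cv; apply: eq_bigr => e _; rewrite ffunE.
  by case: (xe c e); case: (xe d e); rewrite /= ?mulr0 ?mulr1.
- move=> z Hzc Hzd.
  have [e0 He0] : exists e0, [&& xe z e0, ~~ xe c e0 & ~~ xe d e0].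
    case: (boolP [exists e, [&& xe z e, ~~ xe c e & ~~ xe d e]]) => [/existsP //|].
    rewrite negb_exists => /forallP H; exfalso.
    have SB : forall d1 m d2, inrg n.-1 d1 -> inrg n.-1 d2 -> d1 < m -> m < d2 ->
        Bc c d1 != Bc d d1 -> Bc c d2 != Bc d d2 -> ~~ (Bc c m && Bc d m).
      move=> d1 m d2 i1 i2 h1 h2 D1 D2; apply/negP => Cm; move/negP: nbad; apply.
      exact: (bad_intro i1 i2 h1 h2 D1 Cm D2).
    have cont : forall i j, 1 <= i -> i < j -> j <= n.-1.+1 ->
        EB n.-1 (Bc z) i j -> EB n.-1 (Bc c) i j || EB n.-1 (Bc d) i j.
      move=> i j i1 ij jn Ez.
      have [e [e1 e2]] := @edge_of n i j i1 ij ltac:(lia).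
      move: (H e); rewrite /xe e1 e2 Ez /=.
      by case: (EB _ (Bc c) i j); case: (EB _ (Bc d) i j).
    have N1 : 1 < n.-1 by lia.
    case: (U_lemma N1 (ex_intro _ k (conj ik Dk)) SB cont) => E.
    + by move: Hzc; rewrite (cv_eq R n3 E) eqxx.
    + by move: Hzd; rewrite (cv_eq R n3 E) eqxx.
  rewrite !dotE_cv (bigD1 e0) //= [X in (_ < X)%R](bigD1 e0) //=.
  apply: ltr_leD.
  + move/and3P: He0 => [hz hc hd]; rewrite /w ffunE hz (negbTE hc) (negbTE hd) /= ?mulr1n ?mulr0n.
    lra.
  + apply: ler_sum => e _; rewrite /w ffunE.
    by case: (xe z e); case: (xe c e); case: (xe d e); rewrite /= ?mulr1n ?mulr0n; lra.
Qed.
Lemma adj_backward : PYR_adjacent R c d -> hasDt c d (n - 3) && ~~ badt c d (n - 3).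
Proof.
move=> [neq [w [eqw Hz]]].
case: (boolP (hasDt c d (n - 3))) => hD /=; last first.
  by move: neq; rewrite (cv_eq R n3 (hasD_none hD)) eqxx.
apply/negP => /bad_elim [d1 [m [d2 [[i1 im i2 h1 h2] [D1 Cm D2]]]]].
move: Cm; rewrite /Cp => /andP[bcm bdm].
pose Z1 := fun k => if k <= m then Bc c k else Bc d k.
pose Z2 := fun k => if k <= m then Bc d k else Bc c k.
pose z1 := codeOf n Z1. pose z2 := codeOf n Z2.
have BZ1 : forall k, inrg n.-1 k -> Bc z1 k = Z1 k.
  by move=> k; rewrite /inrg => /andP[? ?]; apply: Bc_codeOf; lia.
have BZ2 : forall k, inrg n.-1 k -> Bc z2 k = Z2 k.
  by move=> k; rewrite /inrg => /andP[? ?]; apply: Bc_codeOf; lia.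
have le1 : d1 <= m by lia.
have le2 : (d2 <= m) = false by lia.
have n1 : charvec R n z1 != charvec R n c.
  by apply: (cv_neq R n3 i2); rewrite BZ1 // /Z1 le2 eq_sym.
have n2 : charvec R n z1 != charvec R n d.
  by apply: (cv_neq R n3 i1); rewrite BZ1 // /Z1 le1.
have n3' : charvec R n z2 != charvec R n c.
  by apply: (cv_neq R n3 i1); rewrite BZ2 // /Z2 le1 eq_sym.
have n4 : charvec R n z2 != charvec R n d.
  by apply: (cv_neq R n3 i2); rewrite BZ2 // /Z2 le2.
have l1 := Hz z1 n1 n2.
have l2 := Hz z2 n3' n4.
have sum : (dotE w (charvec R n z1) + dotE w (charvec R n z2) =
            dotE w (charvec R n c) + dotE w (charvec R n d))%R.
  rewrite !dotE_cv -!big_split; apply: eq_bigr => e _.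
rewrite /= -!mulrDr -!natrD.
  congr (_ * _%:R)%R.
  rewrite /xe (@EB_ext _ _ _ _ _ BZ1) (@EB_ext _ _ _ _ _ BZ2).
  symmetry; apply: EB_split => //.
  by case: e => [[a b] /= H].
move: l1 l2 sum; rewrite eqw; lra.
Qed.
End Adj.


Theorem theorem4 :
  exists (M : TM) (C : nat),
    forall n : nat, 3 <= n ->
    forall c d : (n - 3).-tuple bool,
      exists b : bool,
        tm_answers_within M (zip c d) (C * n) b /\
        (forall R : realFieldType, b <-> PYR_adjacent R c d).
Proof.
exists M, 1 => n n3 c d.
exists (acc (foldl dstep q0 (zip c d))); split.
- apply: run; rewrite size_zip !size_tuple minnn mul1n; lia.
- have Es : size c = size d by rewrite !size_tuple.
  have := dfa_inv Es (leqnn (size c)).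
  rewrite take_oversize ?size_zip ?Es ?minnn // => ->.
  rewrite /acc size_tuple => R; split.
  + by move/andP=> [h1 h2]; apply: adj_forward.
  + by move=> H; exact: (adj_backward n3 H).
Qed.
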